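(* Let $T\ge2$ and let the standing assumptions hold (each $f_t$ convex). Then USC satisfies \[ \sum_{t=1}^T f_t(\mathbf{x}_t)-\min_{\mathbf{x}\in\mathcal{X}}\sum_{t=1}^T f_t(\mathbf{x})\le \min_{A\in\mathcal{A}_{con}}R(A)+4\Gamma GD+\frac{\Gamma D}{\sqrt{\ln|\mathcal{E}|}}\sqrt{4G^2+\sum_{t=1}^T\|\nabla f_t(\mathbf{x}_t)\|^2}. \] In particular, when $|\mathcal{A}_{str}|,|\mathcal{A}_{exp}|,|\mathcal{A}_{con}|$ are bounded by constants, the additive term is $O(\sqrt{T\log\log T})$.
   Context: Setting (online convex optimization): $\mathcal{X}\subset\mathbb{R}^d$ is a nonempty closed convex set with $\max_{\mathbf{x},\mathbf{y}\in\mathcal{X}}\|\mathbf{x}-\mathbf{y}\|\le D$. For $t=1,\dots,T$, $f_t:\mathcal{X}\to\mathbb{R}$ are convex differentiable functions with $\max_{\mathbf{x}\in\mathcal{X}}\|\nabla f_t(\mathbf{x})\|\le G$. At round $t$ a learner outputs $\mathbf{x}_t\in\mathcal{X}$ depending only on $f_1,\dots,f_{t-1}$, then $f_t$ is revealed. An online algorithm (expert) is any such procedure. Algorithm USC: Let $N=\lceil\log_2T\rceil$ and $\mathcal{P}_{str}=\mathcal{P}_{exp}=\{2^k/T: k=0,1,\dots,N\}$. Let $\mathcal{A}_{str},\mathcal{A}_{exp}$ be finite sets of online algorithms each taking a positive parameter, and $\mathcal{A}_{con}$ a finite set of online algorithms. The expert set $\mathcal{E}$ consists of the experts $E(A,\lambda')$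 ($A$ run with parameter $\lambda'$) for $A\in\mathcal{A}_{str},\lambda'\in\mathcal{P}_{str}$; $E(A,\alpha')$ for $A\in\mathcal{A}_{exp},\alpha'\in\mathcal{P}_{exp}$; and $E(A)$ for $A\in\mathcal{A}_{con}$. Index them $E^1,\dots,E^{|\mathcal{E}|}$; every expert receives the full functions $f_1,f_2,\dots$ and outputs $\mathbf{x}_t^i\in\mathcal{X}$ at round $t$. Fix any $\bar{\mathbf{x}}\in\mathcal{X}$. USC outputs $\mathbf{x}_t=\sum_i p_t^i\mathbf{x}_t^i$ with weights given by Adapt-ML-Prod on the losses $\ell_t^i=\frac{\langle\nabla f_t(\mathbf{x}_t),\mathbf{x}_t^i-\bar{\mathbf{x}}\rangle+GD}{2GD}\in[0,1]$, $\ell_t=\sum_ip_t^i\ell_t^i$: namely $p_t^i=\eta_{t-1}^iw_{t-1}^i/\sum_j\eta_{t-1}^jw_{t-1}^j$, where $\eta_{t-1}^i=\min\{\frac12,\sqrt{\ln|\mathcal{E}|/(1+\sum_{s=1}^{t-1}(\ell_s-\ell_s^i)^2)}\}$ for $t\ge1$, $w_0^i=1/|\mathcal{E}|$, and $w_{t-1}^i=\big(w_{t-2}^i(1+\eta_{t-2}^i(\ell_{t-1}-\ell_{t-1}^i))\big)^{\eta_{t-1}^i/\eta_{t-2}^i}$ for $t\ge2$. Define $\Gamma=3\ln|\mathcal{E}|+\ln\big(1+\frac{|\mathcal{E}|}{2e}(1+\ln(T+1))\big)$. For $A\in\mathcal{A}_{con}$, $R(A)$ denotes a regret bound of $A$: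 a number such that whenever $f_1,\dots,f_T$ satisfy the setting, the outputs $\mathbf{y}_t$ of $A$ satisfy $\sum_t f_t(\mathbf{y}_t)-\min_{\mathbf{x}\in\mathcal{X}}\sum_tf_t(\mathbf{x})\le R(A)$. *)

(* Defs.v *)
From HB Require Import structures.
From mathcomp Require Import all_boot all_order all_algebra.
From mathcomp Require Import all_classical all_reals.
From mathcomp Require Import topology normedtype derive sequences exp.
Set Implicit Arguments. Unset Strict Implicit. Unset Printing Implicit Defensive.
Import Order.TTheory GRing.Theory Num.Theory.
Import numFieldNormedType.Exports.
Local Open Scope ring_scope.
Local Open Scope classical_set_scope.

Section OCO.
Variables (R : realType) (d : nat).
Local Notation V := 'rV[R]_d.

Definition dotp (u v : V) : R := \sum_(i < d) u 0 i * v 0 i.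
Definition enorm (v : V) : R := Num.sqrt (\sum_(i < d) (v 0 i) ^+ 2).

Definition grad (f : V -> R) (x : V) : V :=
  \row_(i < d) ('d f x) (delta_mx 0 i : V).

Definition convex_set (X : set V) : Prop :=
  forall x y, X x -> X y -> forall l : R, 0 <= l <= 1 ->
    X (l *: x + (1 - l) *: y).

Definition convex_on (X : set V) (f : V -> R) : Prop :=
  forall x y, X x -> X y -> forall l : R, 0 <= l <= 1 ->
    f (l *: x + (1 - l) *: y) <= l * f x + (1 - l) * f y.

Definition domain_ok (X : set V) (D : R) : Prop :=
  (exists x, X x) /\ closed X /\ convex_set X /\
  (forall x y, X x -> X y -> enorm (x - y) <= D).

Definition admissible (X : set V) (G : R) (T : nat) (fs : nat -> V -> R) : Prop :=
  forall t, (1 <= t <= T)%N ->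
    convex_on X (fs t) /\
    (forall x, X x -> differentiable (fs t) x) /\
    (forall x, X x -> enorm (grad (fs t) x) <= G).

(* an online algorithm: maps the history [f_1; ...; f_{t-1}] to x_t *)
Definition alg := seq (V -> R) -> V.
Definition online_alg (X : set V) (A : alg) : Prop := forall h, X (A h).
Definition hist (fs : nat -> V -> R) (t : nat) : seq (V -> R) :=
  [seq fs s | s <- iota 1 t.-1].

Definition regret_bound (X : set V) (G : R) (T : nat) (A : alg) (r : R) : Prop :=
  forall fs, admissible X G T fs -> forall u, X u ->
    \sum_(1 <= t < T.+1) fs t (A (hist fs t)) - \sum_(1 <= t < T.+1) fs t u <= r.

Definition Ngrid (T : nat) : nat := up_log 2 T.
Definition grid (T : nat) : seq R :=
  [seq (2 ^ k)%:R / T%:R | k <- iota 0 (Ngrid T).+1].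

Definition experts (T : nat) (Astr Aexp : seq (R -> alg)) (Acon : seq alg)
  : seq alg :=
  [seq A lam | A <- Astr, lam <- grid T] ++
  [seq A a | A <- Aexp, a <- grid T] ++ Acon.

Section USC.
Variables (T : nat) (Astr Aexp : seq (R -> alg)) (Acon : seq alg).
Variables (fs : nat -> V -> R) (G D : R) (xbar : V).

Let E := experts T Astr Aexp Acon.
Let K := size E.

Definition xexp (t : nat) (i : 'I_K) : V := nth (fun _ => 0) E i (hist fs t).

Definition eta_of (S : 'I_K -> R) (i : 'I_K) : R :=
  Num.min (1 / 2) (Num.sqrt (ln K%:R / (1 + S i))).

(* weights p given w_{t-1} and S_{t-1} = sum_{s<=t-1} (l_s - l_s^i)^2 *)
Definition usc_p (w S : 'I_K -> R) (i : 'I_K) : R :=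
  eta_of S i * w i / \sum_(j < K) eta_of S j * w j.

Definition usc_loss (t : nat) (x : V) (i : 'I_K) : R :=
  (dotp (grad (fs t) x) (xexp t i - xbar) + G * D) / (2 * G * D).

Fixpoint usc_state (n : nat) : ('I_K -> R) * ('I_K -> R) :=
  match n with
  | 0 => (fun _ => 1 / K%:R, fun _ => 0)
  | m.+1 =>
    let (w, S) := usc_state m in
    let p := usc_p w S in
    let x := \sum_(i < K) p i *: xexp m.+1 i in
    let li := usc_loss m.+1 x in
    let l := \sum_(i < K) p i * li i in
    let S' := fun i => S i + (l - li i) ^+ 2 in
    (fun i => (w i * (1 + eta_of S i * (l - li i))) `^ (eta_of S' i / eta_of S i),
     S')
  end.

Definition usc_x (t : nat) : V :=
  let (w, S) := usc_state t.-1 in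
  \sum_(i < K) usc_p w S i *: xexp t i.

End USC.

Definition Gamma (K T : nat) : R :=
  3 * ln K%:R + ln (1 + K%:R / (2 * expR 1) * (1 + ln (T.+1)%:R)).

(* the additive term, with s standing for sum_t ||grad f_t(x_t)||^2 *)
Definition add_term (K T : nat) (G D s : R) : R :=
  4 * Gamma K T * G * D
  + Gamma K T * D / Num.sqrt (ln K%:R) * Num.sqrt (4 * G ^+ 2 + s).

End OCO.

(* Main.v *)
Require Import Defs.
From HB Require Import structures.
From mathcomp Require Import all_boot all_order all_algebra.
From mathcomp Require Import all_classical all_reals.
From mathcomp Require Import topology normedtype derive sequences exp.
From mathcomp Require Import ring lra.
Set Implicit Arguments. Unset Strict Implicit. Unset Printing Implicit Defensive.
Import Order.TTheory GRing.Theory Num.Theory.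
Import numFieldNormedType.Exports.
Local Open Scope ring_scope.
Local Open Scope classical_set_scope.

Section P1.
Variable R : realType.

Definition hln : R -> R := (@ln R - (id - cst 1)) + (id - cst 1) ^+ 2.

Lemma hln_derive (u : R) : 0 < u -> is_derive u 1 hln (u^-1 - 1 + 2 * (u - 1)).
Proof.
move=> u0.
have h1 : is_derive u (1:R) (@ln R) u^-1 by exact: is_derive1_ln.
have h2 : is_derive u (1:R) (@id R - cst 1) 1.
  have := @is_deriveB R R R (@id R) (cst 1) u 1 1 0 (is_derive_id _ _) (is_derive_cst _ _ _). rewrite subr0. exact.
have h3 := is_deriveX 2 h2.
have := is_deriveD (is_deriveB h1 h2) h3.
by rewrite /hln => H; apply: is_derive_eq H _; rewrite [_%:A]mulr1 expr1.
Qed.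

Lemma hln_der1 (u : R) : 0 < u -> hln^`() u = u^-1 - 1 + 2 * (u - 1).
Proof. by move=> u0; rewrite derive1E; have [_ ->] := hln_derive u0. Qed.

Lemma hln_derivable (u : R) : 0 < u -> derivable hln u 1.
Proof. by move=> u0; have [] := hln_derive u0. Qed.

Lemma hlnE (u : R) : hln u = ln u - (u - 1) + (u - 1) ^+ 2.
Proof. by []. Qed.

Lemma hln1 : hln 1 = 0.
Proof. by rewrite hlnE ln1 subrr expr0n /= subrr addr0. Qed.

Lemma ln_lb (x : R) : -1/2 <= x <= 1/2 -> x - x ^+ 2 <= ln (1 + x).
Proof.
move=> /andP[xl xu].
have e : ln (1 + x) = hln (1 + x) + x - x ^+ 2.
  by rewrite hlnE (addrC 1 x) addrK; lra.
rewrite e; suff : 0 <= hln (1 + x) by lra.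
have cont : forall a b : R, 0 < a -> {within `[a, b], continuous hln}.
  move=> a b a0; apply: derivable_within_continuous => y.
  rewrite in_itv /= => /andP[ay _]; apply: hln_derivable; exact: lt_le_trans ay.
case: (lerP x 0) => x0.
- rewrite -hln1.
  have ha : (0:R) < 1/2 by lra.
  apply: (@ler0_derive1_le_cc _ hln (1/2) 1) => //.
  + move=> y; rewrite in_itv /= => /andP[ay _]; apply: hln_derivable. lra.
  + move=> y; rewrite in_itv /= => /andP[ay yb]; rewrite hln_der1; last by lra.
    have y0 : 0 < y by lra.
    have hz : y * y^-1 = 1 by rewrite mulfV // lt0r_neq0.
    nra.
  + exact: cont.
  + rewrite in_itv /=; apply/andP; split; lra.
  + rewrite in_itv /=; apply/andP; split; lra.
  + lra.
- rewrite -hln1.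
  apply: (@ger0_derive1_le_cc _ hln 1 (3/2)) => //.
  + move=> y; rewrite in_itv /= => /andP[ay _]; apply: hln_derivable. lra.
  + move=> y; rewrite in_itv /= => /andP[ay yb]; rewrite hln_der1; last by lra.
    have y0 : 0 < y by lra.
    have hz : y * y^-1 = 1 by rewrite mulfV // lt0r_neq0.
    nra.
  + apply: cont; lra.
  + rewrite in_itv /=; apply/andP; split; lra.
  + rewrite in_itv /=; apply/andP; split; lra.
  + lra.
Qed.

End P1.
Arguments hln {R}.

Section P1b.
Variable R : realType.
Lemma ln_ge1V (u : R) : 0 < u -> 1 - u^-1 <= ln u.
Proof.
move=> u0.
have hu : 0 < u^-1 by rewrite invr_gt0.
have := @le_ln1Dx R (u^-1 - 1).
have -> : 1 + (u^-1 - 1) = u^-1 by ring.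
rewrite lnV ?posrE // => H.
have := H ltac:(lra); lra.
Qed.

Lemma ln_le_sub1 (u : R) : 0 < u -> ln u <= u - 1.
Proof.
move=> u0; have := @le_ln1Dx R (u - 1).
have -> : 1 + (u - 1) = u by ring.
apply; lra.
Qed.

Lemma expR_tangent (a m : R) : expR m * (1 + a - m) <= expR a.
Proof.
have -> : expR a = expR m * expR (a - m) by rewrite -expRD addrC subrK.
rewrite ler_pM2l ?expR_gt0 // -addrA; exact: expR_ge1Dx.
Qed.

Lemma powR_le (y b : R) : 0 < y -> 0 < b <= 1 ->
  y `^ b <= y + (b^-1 - 1) / expR 1.
Proof.
move=> y0 /andP[b0 b1].
case: (eqVneq b 1) => [->|bne1].
  by rewrite powRr1 ?(ltW y0) // invr1 subrr mul0r addr0.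
have b1' : b < 1 by rewrite lt_neqAle bne1.
have hb : 0 < 1 - b by lra.
set m := b * ln y.
set a := ln y - ln b.
set c := b * ln b / (1 - b).
have hm : b * a + (1 - b) * c = m.
  rewrite /a /c /m; field; exact: lt0r_neq0 hb.
have hpow : y `^ b = expR m by rewrite /powR gt_eqF.
have ea : expR a = y / b by rewrite expRB !lnK ?posrE.
have t1 := expR_tangent a m.
have t2 := expR_tangent c m.
have em : 0 < expR m by exact: expR_gt0.
have key : expR m <= b * expR a + (1 - b) * expR c.
  have k1 : b * (expR m * (1 + a - m)) <= b * expR a by rewrite ler_pM2l.
  have k2 : (1 - b) * (expR m * (1 + c - m)) <= (1 - b) * expR c by rewrite ler_pM2l.
  apply: le_trans (lerD k1 k2).
  have -> : b * (expR m * (1 + a - m)) + (1 - b) * (expR m * (1 + c - m)) =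
    expR m * (b * (1 + a - m) + (1 - b) * (1 + c - m)) by ring.
  suff -> : b * (1 + a - m) + (1 - b) * (1 + c - m) = 1 by rewrite mulr1.
  rewrite -hm; ring.
have ec : expR c <= b^-1 / expR 1.
  have lnb : ln b <= b - 1 by exact: ln_le_sub1.
  have hc : c <= - 1 - ln b.
    rewrite /c ler_pdivrMr //; lra.
  have : expR c <= expR (- 1 - ln b) by rewrite ler_expR.
  by rewrite expRB expRN lnK ?posrE // mulrC.
rewrite hpow; apply: (le_trans key).
have -> : b * expR a = y by rewrite ea mulrC divfK // lt0r_neq0.
rewrite lerD2l.
have -> : (b^-1 - 1) / expR 1 = (1 - b) * (b^-1 / expR 1).
  by field; rewrite !lt0r_neq0 ?expR_gt0.
by rewrite ler_pM2l.
Qed.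

End P1b.

Section P2.
Variable R : realType.

Lemma step_sqrt (x y : R) : 1 <= x -> x <= y <= x + 1 ->
  Num.sqrt (y / x) - 1 <= (ln y - ln x) / 2 + (x^-1 - y^-1) / 2.
Proof.
move=> x1 /andP[xy yx].
have x0 : 0 < x by lra.
have y0 : 0 < y by lra.
set s := Num.sqrt (y / x).
have hyx : 1 <= y / x by rewrite ler_pdivlMr // mul1r.
have s2 : s ^+ 2 = y / x by rewrite sqr_sqrtr // (le_trans _ hyx).
have s1 : 1 <= s by rewrite -sqrtr1 ler_sqrt // (le_trans _ hyx).
have s0 : 0 < s by lra.
have lns : ln s = (ln y - ln x) / 2.
  have : ln (s ^+ 2) = ln s *+ 2 by rewrite lnXn.
  by rewrite s2 ln_div ?posrE // => ->; rewrite mulr2n; field.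
have hl := ln_ge1V s0.
set d := y - x.
have d0 : 0 <= d by rewrite /d; lra.
have d1 : d <= 1 by rewrite /d; lra.
have A : s - 1 - ln s <= (s - 1) ^+ 2.
  have : 1 - s^-1 <= ln s by [].
  have ss : s * s^-1 = 1 by rewrite mulfV // lt0r_neq0.
  have iv1 : s^-1 <= 1 by rewrite invr_le1 // unitf_gt0.
  set iv := s^-1 in ss iv1 *.
  have e : s - 2 + iv = (s - 1) ^+ 2 * iv.
    transitivity (s * (s * iv) - 2 * (s * iv) + iv); first by rewrite ss; ring.
    ring.
  have : (s - 1) ^+ 2 * iv <= (s - 1) ^+ 2.
    by rewrite -{2}[(s - 1) ^+ 2]mulr1 ler_wpM2l ?sqr_ge0.
  lra.
have B : (s - 1) ^+ 2 <= ((s ^+ 2 - 1) / 2) ^+ 2.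
  have -> : (s ^+ 2 - 1) / 2 = (s - 1) * ((s + 1) / 2) by field.
  rewrite exprMn -{1}[(s - 1) ^+ 2]mulr1 ler_wpM2l ?sqr_ge0 //.
  have h : 1 <= (s + 1) / 2 by lra.
  by rewrite -[1](expr1n _ 2) lerXn2r ?nnegrE //; lra.
have C : s ^+ 2 - 1 = d / x by rewrite s2 /d; field; exact: lt0r_neq0.
have D : (d / x / 2) ^+ 2 <= (x^-1 - y^-1) / 2.
  rewrite -subr_ge0.
  have -> : (x^-1 - y^-1) / 2 - (d / x / 2) ^+ 2 = (d * (2 * x - d * y)) / (4 * x ^+ 2 * y).
    rewrite /d; field; apply/andP; split; exact: lt0r_neq0.
  apply: divr_ge0; last by apply: mulr_ge0; [apply: mulr_ge0; [lra|exact: sqr_ge0]|lra].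
  apply: mulr_ge0 => //.
  have : d * y <= y by rewrite -{2}[y]mul1r ler_wpM2r //; lra.
  rewrite /d; lra.
rewrite -lns; rewrite C in B; lra.
Qed.

Lemma sum_sqrt_ratio (a : nat -> R) (n : nat) : a 0%N = 1 ->
  (forall t, (t < n)%N -> a t <= a t.+1 <= a t + 1) ->
  \sum_(0 <= t < n) (Num.sqrt (a t.+1 / a t) - 1) <= (1 + ln (a n)) / 2.
Proof.
move=> a0 ha.
have a1 : forall t, (t <= n)%N -> 1 <= a t.
  elim=> [|t IH] tn; first by rewrite a0.
  have := ha t tn; have := IH (ltnW tn); lra.
apply: (le_trans (ler_sum_nat (G := fun t => (ln (a t.+1) - ln (a t)) / 2
    + ((a t)^-1 - (a t.+1)^-1) / 2) _)).
  move=> t /andP[_ tn]; apply: step_sqrt; [exact: a1 (ltnW tn)| exact: ha].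
have e1 := telescope_sumr (fun t => ln (a t)) (leq0n n).
have e2 : \sum_(0 <= t < n) ((a t)^-1 - (a t.+1)^-1) = (a 0%N)^-1 - (a n)^-1.
  rewrite -[RHS]opprB -(telescope_sumr (fun t => (a t)^-1)) // -sumrN.
  by apply: eq_bigr => t _; rewrite opprB.
rewrite big_split /= -!mulr_suml /= e1 e2 a0 ln1 invr1.
have : 0 <= (a n)^-1 by rewrite invr_ge0; have := a1 n (leqnn n); lra.
lra.
Qed.

Lemma step_sqrt2 (x y : R) : 1 <= x -> x <= y <= x + 1 ->
  (y - x) / Num.sqrt x <= 3 * (Num.sqrt y - Num.sqrt x).
Proof.
move=> x1 /andP[xy yx].
have x0 : 0 <= x by lra.
have y0 : 0 <= y by lra.
have p1 : 1 <= Num.sqrt x by rewrite -sqrtr1 ler_sqrt.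
have pq : Num.sqrt x <= Num.sqrt y by rewrite ler_sqrt.
have px := sqr_sqrtr x0.
have qy := sqr_sqrtr y0.
set p := Num.sqrt x in p1 pq px *.
set q := Num.sqrt y in pq qy *.
have q2p : q <= 2 * p.
  have : q ^+ 2 <= 2 * p ^+ 2 by rewrite qy px; lra.
  have q0 : 0 <= q by exact: sqrtr_ge0.
  nra.
rewrite ler_pdivrMr; last lra.
rewrite -px -qy; nra.
Qed.

Lemma sum_sqrt_diff (a : nat -> R) (n : nat) : 1 <= a 0%N ->
  (forall t, (t < n)%N -> a t <= a t.+1 <= a t + 1) ->
  \sum_(0 <= t < n) (a t.+1 - a t) / Num.sqrt (a t) <= 3 * Num.sqrt (a n).
Proof.
move=> a0 ha.
have a1 : forall t, (t <= n)%N -> 1 <= a t.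
  elim=> [|t IH] tn; first by [].
  have := ha t tn; have := IH (ltnW tn); lra.
apply: (le_trans (ler_sum_nat (G := fun t => 3 * (Num.sqrt (a t.+1) - Num.sqrt (a t))) _)).
  move=> t /andP[_ tn]; apply: step_sqrt2; [exact: a1 (ltnW tn)| exact: ha].
rewrite -mulr_sumr (telescope_sumr (fun t => Num.sqrt (a t))) //.
have := sqrtr_ge0 (a 0%N); lra.
Qed.

Lemma sum_bound (a : nat -> R) (n : nat) :
  (forall t, (t < n)%N -> a t.+1 <= a t + 1) -> a n <= a 0%N + n%:R.
Proof.
elim: n => [|n IH] h; first by rewrite addr0.
have := IH (fun t tn => h t (ltnW tn)); have := h n (ltnSn n).
rewrite -addn1 natrD; lra.
Qed.

Definition etaf (L u : R) : R := Num.min (1 / 2) (Num.sqrt (L / u)).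

Lemma etaf_gt0 L u : 0 < L -> 0 < u -> 0 < etaf L u.
Proof.
move=> L0 u0; rewrite /etaf lt_min; apply/andP; split; first lra.
by rewrite sqrtr_gt0 divr_gt0.
Qed.

Lemma etaf_le12 L u : etaf L u <= 1 / 2.
Proof. by rewrite /etaf ge_min lexx. Qed.

Lemma etaf_le_sqrt L u : etaf L u <= Num.sqrt (L / u).
Proof. by rewrite /etaf ge_min lexx orbT. Qed.

Lemma etaf_anti L u v : 0 <= L -> 0 < u -> u <= v -> etaf L v <= etaf L u.
Proof.
move=> L0 u0 uv; rewrite /etaf le_min ge_min lexx /= ge_min; apply/orP; right.
rewrite ler_sqrt ?divr_ge0 //; last lra.
rewrite ler_wpM2l // lef_pV2 ?posrE //; lra.
Qed.

Lemma sqrt_div (x y : R) : 0 <= x -> 0 < y -> Num.sqrt (x / y) = Num.sqrt x / Num.sqrt y.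
Proof. by move=> x0 y0; rewrite sqrtrM // sqrtrV // ltW. Qed.

Lemma etaf_ratio L u v : 0 < L -> 0 < u -> u <= v ->
  etaf L u / etaf L v <= Num.sqrt (v / u).
Proof.
move=> L0 u0 uv.
have v0 : 0 < v by lra.
rewrite ler_pdivrMr ?etaf_gt0 //.
have q1 : 1 <= Num.sqrt (v / u).
  by rewrite -sqrtr1 ler_sqrt ?divr_ge0 ?(ltW v0) ?(ltW u0) // ler_pdivlMr // mul1r.
rewrite /etaf [X in _ <= _ * X]minEle; case: ifP => _.
- apply: (le_trans (etaf_le12 L u)); rewrite -{1}[1/2]mul1r ler_wpM2r //; lra.
- have -> : Num.sqrt (v / u) * Num.sqrt (L / v) = Num.sqrt (L / u).
    rewrite -sqrtrM ?divr_ge0 ?(ltW v0) ?(ltW u0) //; congr Num.sqrt.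
    by field; rewrite !lt0r_neq0.
  exact: etaf_le_sqrt.
Qed.

Lemma inv_etaf L u : 0 < L -> 0 < u ->
  (etaf L u)^-1 <= 2 + Num.sqrt u / Num.sqrt L.
Proof.
move=> L0 u0.
have h : 0 <= Num.sqrt u / Num.sqrt L by rewrite divr_ge0 ?sqrtr_ge0.
rewrite /etaf minEle; case: ifP => _.
- have -> : (1 / 2 : R)^-1 = 2 by field.
  lra.
  rewrite sqrt_div ?(ltW L0) // invf_div; lra.
Qed.

Lemma etaf_le_div L u : 0 <= L -> 0 < u -> etaf L u <= Num.sqrt L / Num.sqrt u.
Proof. by move=> L0 u0; rewrite -sqrt_div //; exact: etaf_le_sqrt. Qed.

End P2.

Section AMP.
Variables (R : realType) (K T : nat) (L : nat -> ('I_K -> R) -> 'I_K -> R).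

Definition eta (S : 'I_K -> R) (i : 'I_K) : R := etaf (ln K%:R) (1 + S i).

Definition pp (w S : 'I_K -> R) (i : 'I_K) : R :=
  eta S i * w i / \sum_(j < K) eta S j * w j.

Fixpoint st (n : nat) : ('I_K -> R) * ('I_K -> R) :=
  match n with
  | 0 => (fun _ => 1 / K%:R, fun _ => 0)
  | m.+1 =>
    let (w, S) := st m in
    let p := pp w S in
    let li := L m.+1 p in
    let l := \sum_(i < K) p i * li i in
    let S' := fun i => S i + (l - li i) ^+ 2 in
    (fun i => (w i * (1 + eta S i * (l - li i))) `^ (eta S' i / eta S i), S')
  end.

Definition pt t := pp (st t.-1).1 (st t.-1).2.
Definition lt t := \sum_(i < K) pt t i * L t (pt t) i.
Definition rt t i := lt t - L t (pt t) i.

Lemma S_S n i : (st n.+1).2 i = (st n).2 i + rt n.+1 i ^+ 2.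
Proof. by rewrite /rt /lt /pt /=; case: (st n). Qed.

Lemma w_S n i : (st n.+1).1 i =
  ((st n).1 i * (1 + eta (st n).2 i * rt n.+1 i)) `^ (eta (st n.+1).2 i / eta (st n).2 i).
Proof. by rewrite /rt /lt /pt /=; case: (st n). Qed.

Hypothesis K1 : (1 < K)%N.
Hypothesis hL : forall t p, (0 < t <= T)%N -> (forall i, 0 <= p i) ->
  \sum_(i < K) p i = 1 -> forall i, 0 <= L t p i <= 1.

Lemma LK_gt0 : 0 < ln (K%:R : R).
Proof. by apply: ln_gt0; rewrite ltr1n. Qed.

Lemma S_ge0 n i : 0 <= (st n).2 i.
Proof.
elim: n => [|n IH]; first by [].
by rewrite S_S addr_ge0 // sqr_ge0.
Qed.

Lemma eta_gt0 n i : 0 < eta (st n).2 i.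
Proof. apply: etaf_gt0; [exact: LK_gt0|]; have := S_ge0 n i; lra. Qed.

Lemma eta_le12 S i : eta S i <= 1 / 2.
Proof. exact: etaf_le12. Qed.

Lemma pp_ge0 w S i : (forall j, 0 < w j) -> (forall j, 0 < eta S j) -> 0 <= pp w S i.
Proof.
move=> w0 e0; rewrite /pp; apply: divr_ge0; first by rewrite mulr_ge0 // ltW.
by apply: sumr_ge0 => j _; rewrite mulr_ge0 // ltW.
Qed.

Lemma Z_gt0 w S : (forall j, 0 < w j) -> (forall j, 0 < eta S j) ->
  0 < \sum_(j < K) eta S j * w j.
Proof.
move=> w0 e0.
have K0 : (0 < K)%N by apply: ltn_trans K1.
rewrite (bigD1 (Ordinal K0)) //=; apply: ltr_pwDl; first by rewrite mulr_gt0.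
by apply: sumr_ge0 => j _; rewrite mulr_ge0 // ltW.
Qed.

Lemma pp_sum w S : (forall j, 0 < w j) -> (forall j, 0 < eta S j) ->
  \sum_(i < K) pp w S i = 1.
Proof.
move=> w0 e0; rewrite /pp -mulr_suml mulfV //; exact: lt0r_neq0 (Z_gt0 w0 e0).
Qed.

Lemma zero_sum w S (li : 'I_K -> R) : (forall j, 0 < w j) -> (forall j, 0 < eta S j) ->
  \sum_(i < K) w i * (eta S i * (\sum_(j < K) pp w S j * li j - li i)) = 0.
Proof.
move=> w0 e0.
set Z := \sum_(j < K) eta S j * w j.
have Z0 : Z != 0 by exact: lt0r_neq0 (Z_gt0 w0 e0).
have -> : \sum_(j < K) pp w S j * li j = (\sum_(j < K) eta S j * w j * li j) / Z.
  rewrite mulr_suml; apply: eq_bigr => j _; rewrite /pp -/Z; field; exact: Z0.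
under eq_bigr => i _ do rewrite mulrBr mulrBr.
rewrite sumrB.
set C := (\sum_(j < K) eta S j * w j * li j) / Z.
have -> : \sum_(i < K) w i * (eta S i * C) = (\sum_(i < K) w i * eta S i) * C.
  by rewrite mulr_suml; apply: eq_bigr => i _; ring.
have -> : \sum_(i < K) w i * (eta S i * li i) = \sum_(j < K) eta S j * w j * li j.
  by apply: eq_bigr => i _; ring.
have -> : \sum_(i < K) w i * eta S i = Z by apply: eq_bigr => i _; ring.
rewrite /C; field; exact: Z0.
Qed.

Lemma ptS n : pt n.+1 = pp (st n).1 (st n).2.
Proof. by []. Qed.

Lemma bounds_of n : (n < T)%N -> (forall i, 0 < (st n).1 i) ->
  [/\ forall i, 0 <= pt n.+1 i, \sum_(i < K) pt n.+1 i = 1,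
      forall i, 0 <= L n.+1 (pt n.+1) i <= 1,
      0 <= lt n.+1 <= 1 & forall i, -1 <= rt n.+1 i <= 1].
Proof.
move=> nT w0.
have e0 : forall j, 0 < eta (st n).2 j by move=> j; exact: eta_gt0.
have p0 : forall i, 0 <= pt n.+1 i by move=> i; rewrite ptS; exact: pp_ge0.
have p1 : \sum_(i < K) pt n.+1 i = 1 by rewrite ptS; exact: pp_sum.
have hl : forall i, 0 <= L n.+1 (pt n.+1) i <= 1 by apply: hL => //.
have hlt : 0 <= lt n.+1 <= 1.
  apply/andP; split.
    by apply: sumr_ge0 => i _; apply: mulr_ge0 => //; case/andP: (hl i).
  rewrite -p1; apply: ler_sum => i _; rewrite -{2}[pt n.+1 i]mulr1.
  by apply: ler_wpM2l => //; case/andP: (hl i).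
split => // i; rewrite /rt; have := hl i; move: hlt; lra.
Qed.

Lemma w_pos n : (n <= T)%N -> forall i, 0 < (st n).1 i.
Proof.
elim: n => [|n IH] nT i.
  by rewrite /= divr_gt0 // ltr0n; apply: ltn_trans K1.
have w0 := IH (ltnW nT).
have [_ _ _ _ hr] := bounds_of nT w0.
rewrite w_S; apply: powR_gt0; apply: mulr_gt0; first exact: w0.
have := eta_gt0 n i; have := eta_le12 (st n).2 i; have := hr i.
set e := eta _ i; set r := rt _ i; nra.
Qed.

Lemma r_bound t i : (0 < t <= T)%N -> -1 <= rt t i <= 1.
Proof.
case: t => [//|n] /andP[_ nT].
have [_ _ _ _ hr] := bounds_of nT (w_pos (ltnW nT)); exact: hr.
Qed.

Lemma eta_anti n i : eta (st n.+1).2 i <= eta (st n).2 i.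
Proof.
apply: etaf_anti; first exact: ltW LK_gt0.
  by have := S_ge0 n i; lra.
by rewrite S_S lerD2l addrC -lerBlDr subrr sqr_ge0.
Qed.

Lemma W_step n : (n < T)%N ->
  \sum_(i < K) (st n.+1).1 i <= \sum_(i < K) (st n).1 i +
    (expR 1)^-1 * \sum_(i < K) (eta (st n).2 i / eta (st n.+1).2 i - 1).
Proof.
move=> nT.
have w0 := w_pos (ltnW nT).
have [_ _ _ _ hr] := bounds_of nT w0.
have e0 : forall j, 0 < eta (st n).2 j by move=> j; exact: eta_gt0.
have step : forall i, (st n.+1).1 i <= (st n).1 i + (st n).1 i * (eta (st n).2 i * rt n.+1 i)
   + (eta (st n).2 i / eta (st n.+1).2 i - 1) / expR 1.
  move=> i; rewrite w_S.
  have e1 := eta_gt0 n.+1 i.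
  have pos : 0 < (st n).1 i * (1 + eta (st n).2 i * rt n.+1 i).
    apply: mulr_gt0; first exact: w0.
    have := eta_gt0 n i; have := eta_le12 (st n).2 i; have := hr i.
    set e := eta _ i; set r := rt _ i; nra.
  have hb : 0 < eta (st n.+1).2 i / eta (st n).2 i <= 1.
    by rewrite divr_gt0 //= ler_pdivrMr // mul1r eta_anti.
  apply: (le_trans (powR_le pos hb)).
  by rewrite invf_div mulrDr mulr1.
apply: (le_trans (ler_sum _ (fun i _ => step i))).
rewrite big_split /= big_split /= mulr_sumr.
have -> : \sum_(i < K) (st n).1 i * (eta (st n).2 i * rt n.+1 i) = 0.
  exact: (zero_sum (L n.+1 (pt n.+1)) w0 e0).
by rewrite addr0 lerD2l; apply: ler_sum => i _; rewrite mulrC.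
Qed.

Lemma W0 : \sum_(i < K) (st 0).1 i = 1.
Proof.
rewrite /= sumr_const card_ord mul1r -[_ *+ K]mulr_natr mulVf //.
by rewrite pnatr_eq0 -lt0n; apply: ltn_trans K1.
Qed.

Lemma W_T n : (n <= T)%N -> \sum_(i < K) (st n).1 i <= 1 + (expR 1)^-1 *
  \sum_(0 <= t < n) \sum_(i < K) (eta (st t).2 i / eta (st t.+1).2 i - 1).
Proof.
elim: n => [|n IH] nT; first by rewrite W0 big_geq // mulr0 addr0.
apply: (le_trans (W_step nT)); rewrite big_nat_recr //= mulrDr addrA lerD2r.
exact: IH (ltnW nT).
Qed.

Lemma a_step t i : (t < T)%N ->
  1 + (st t).2 i <= 1 + (st t.+1).2 i <= 1 + (st t).2 i + 1.
Proof.
move=> tT; rewrite S_S.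
have := r_bound i (t:=t.+1) tT; set r := rt _ i => hr.
have h1 : 0 <= r ^+ 2 by exact: sqr_ge0.
have h2 : r ^+ 2 <= 1 by nra.
apply/andP; split; lra.
Qed.

Lemma natS (n : nat) : (n.+1)%:R = 1 + n%:R :> R.
Proof. by rewrite -addn1 natrD addrC. Qed.

Lemma aT_le i : 1 + (st T).2 i <= 1 + T%:R.
Proof.
have := @sum_bound R (fun t => 1 + (st t).2 i) T.
rewrite /= addr0; apply => t tT; by case/andP: (a_step i tT).
Qed.

Lemma ratio_sum i : \sum_(0 <= t < T) (eta (st t).2 i / eta (st t.+1).2 i - 1)
  <= (1 + ln (T.+1)%:R) / 2.
Proof.
set a := fun t => 1 + (st t).2 i.
have a0 : forall t, 0 < a t by move=> t; rewrite /a; have := S_ge0 t i; lra.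
apply: (le_trans (ler_sum_nat (G := fun t => Num.sqrt (a t.+1 / a t) - 1) _)).
  move=> t /andP[_ tT]; rewrite lerD2r; apply: etaf_ratio; first exact: LK_gt0.
    exact: a0.
  by case/andP: (a_step i tT).
apply: (le_trans (sum_sqrt_ratio _ _)); first by rewrite /a /= addr0.
  by move=> t tT; exact: a_step.
suff : ln (a T) <= ln (T.+1)%:R by lra.
rewrite ler_ln ?posrE ?ltr0n //; by rewrite natS; exact: aT_le.
Qed.

Lemma sum_cst (c : R) : \sum_(i < K) c = K%:R * c.
Proof. by rewrite sumr_const card_ord mulr_natl. Qed.

Lemma wT_le i : (st T).1 i <= 1 + K%:R / (2 * expR 1) * (1 + ln (T.+1)%:R).
Proof.
have w0 := w_pos (leqnn T).
apply: (@le_trans _ _ (\sum_(j < K) (st T).1 j)).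
  rewrite (bigD1 i) //= lerDl; apply: sumr_ge0 => j _; exact: ltW.
apply: (le_trans (W_T (leqnn T))).
rewrite lerD2l exchange_big /=.
have -> : K%:R / (2 * expR 1) * (1 + ln (T.+1)%:R) =
    (expR 1)^-1 * (\sum_(i < K) (1 + ln (T.+1)%:R) / 2) :> R.
  rewrite sum_cst; field; exact: lt0r_neq0 (expR_gt0 1).
rewrite ler_pM2l ?invr_gt0 ?expR_gt0 //; apply: ler_sum => j _; exact: ratio_sum.
Qed.

Lemma lnw_lb n : (n <= T)%N -> forall i,
  - ln K%:R / eta (st 0).2 i +
    \sum_(0 <= t < n) (rt t.+1 i - eta (st t).2 i * rt t.+1 i ^+ 2)
  <= ln ((st n).1 i) / eta (st n).2 i.
Proof.
elim: n => [|n IH] nT i.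
  rewrite big_geq // addr0 /= div1r lnV ?posrE ?ltr0n; last by apply: ltn_trans K1.
  by rewrite mulNr.
have IHn := IH (ltnW nT) i.
have w0 := w_pos (ltnW nT).
have [_ _ _ _ hr] := bounds_of nT w0.
have e0 := eta_gt0 n i.
have e1 := eta_gt0 n.+1 i.
have e12 := eta_le12 (st n).2 i.
have hri := hr i.
set e := eta (st n).2 i in e0 e12 *.
set e' := eta (st n.+1).2 i in e1 *.
set r := rt n.+1 i in hri *.
case/andP: hri => hr1 hr2.
have pos : 0 < 1 + e * r by nra.
have key : ln ((st n.+1).1 i) / e' = ln ((st n).1 i) / e + ln (1 + e * r) / e.
  rewrite w_S -/e -/e' -/r ln_powR lnM ?posrE ?w0 //.
  by field; rewrite !lt0r_neq0.
have lb : r - e * r ^+ 2 <= ln (1 + e * r) / e.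
  rewrite ler_pdivlMr //.
  have -> : (r - e * r ^+ 2) * e = e * r - (e * r) ^+ 2 by ring.
  apply: ln_lb; apply/andP; split; nra.
rewrite key big_nat_recr //= -/e -/r.
move: IHn lb; lra.
Qed.

Lemma eta0_ge i : 1 / 4 <= eta (st 0).2 i.
Proof.
rewrite /eta /etaf le_min; apply/andP; split; first lra.
have L0 := LK_gt0.
have lk : 1 / 2 <= ln (K%:R : R).
  have h2 : (2 : R) <= K%:R by rewrite ler_nat.
  apply: le_trans (_ : ln 2 <= _); last by rewrite ler_ln ?posrE //; lra.
  have := ln_ge1V (ltr0Sn R 1); lra.
rewrite /= addr0 divr1.
have s0 := sqrtr_ge0 (ln (K%:R : R)).
have s2 := sqr_sqrtr (ltW L0).
nra.
Qed.

Lemma sum_eta_r2 i : \sum_(0 <= t < T) eta (st t).2 i * rt t.+1 i ^+ 2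
  <= 3 * Num.sqrt (ln K%:R) * Num.sqrt (1 + (st T).2 i).
Proof.
set a := fun t => 1 + (st t).2 i.
have a0 : forall t, 0 < a t by move=> t; rewrite /a; have := S_ge0 t i; lra.
apply: (le_trans (ler_sum_nat (G := fun t => Num.sqrt (ln K%:R) * ((a t.+1 - a t) / Num.sqrt (a t))) _)).
  move=> t /andP[_ tT].
  have -> : rt t.+1 i ^+ 2 = a t.+1 - a t by rewrite /a S_S; ring.
  have -> : Num.sqrt (ln K%:R) * ((a t.+1 - a t) / Num.sqrt (a t)) =
    Num.sqrt (ln K%:R) / Num.sqrt (a t) * (a t.+1 - a t) by ring.
  apply: ler_wpM2r.
    by have /andP[h1 h2] := a_step i tT; rewrite /a; lra.
  rewrite /eta; exact: etaf_le_div (ltW LK_gt0) (a0 t).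
rewrite -mulr_sumr [3 * _]mulrC -mulrA ler_wpM2l ?sqrtr_ge0 //.
apply: sum_sqrt_diff; first by rewrite /a /= addr0.
by move=> t tT; exact: a_step.
Qed.

Theorem amp_bound i :
  \sum_(0 <= t < T) rt t.+1 i <=
    Gamma R K T / Num.sqrt (ln K%:R) * Num.sqrt (1 + (st T).2 i) + 2 * Gamma R K T.
Proof.
have L0 := LK_gt0.
set LK := ln (K%:R : R) in L0 *.
set B := ln (1 + (K%:R : R) / (2 * expR 1) * (1 + ln (T.+1)%:R)).
have hG : Gamma R K T = 3 * LK + B by [].
rewrite hG.
set aT := 1 + (st T).2 i.
have aT0 : 0 < aT by rewrite /aT; have := S_ge0 T i; lra.
have lb := lnw_lb (leqnn T) i.
have hsplit : \sum_(0 <= t < T) rt t.+1 i =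
    \sum_(0 <= t < T) (rt t.+1 i - eta (st t).2 i * rt t.+1 i ^+ 2) +
    \sum_(0 <= t < T) eta (st t).2 i * rt t.+1 i ^+ 2.
  by rewrite -big_split; apply: eq_bigr => t _; rewrite /= subrK.
have arg0 : 0 <= K%:R / (2 * expR 1) * (1 + ln (T.+1)%:R) :> R.
  apply: mulr_ge0; first by apply: divr_ge0 => //; apply: mulr_ge0 => //; exact: expR_ge0.
  have : 0 <= ln (T.+1)%:R :> R by apply: ln_ge0; rewrite ler1n.
  lra.
have B0 : 0 <= B by apply: ln_ge0; lra.
have h1 : ln ((st T).1 i) <= B.
  rewrite ler_ln ?posrE; [exact: wT_le | exact: w_pos | lra].
have eT := eta_gt0 T i.
have h2 : ln ((st T).1 i) / eta (st T).2 i <= B * (2 + Num.sqrt aT / Num.sqrt LK).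
  apply: (@le_trans _ _ (B / eta (st T).2 i)); first by rewrite ler_pM2r ?invr_gt0.
  by apply: ler_wpM2l => //; exact: inv_etaf.
have e0 := eta0_ge i.
have e0p := eta_gt0 0 i.
have h3 : LK / eta (st 0).2 i <= 4 * LK.
  rewrite ler_pdivrMr //.
  have : LK * (1 / 4) <= LK * eta (st 0).2 i by apply: ler_wpM2l => //; exact: ltW.
  lra.
have h4 := sum_eta_r2 i.
have s0 : 0 < Num.sqrt LK by rewrite sqrtr_gt0.
have sL := sqr_sqrtr (ltW L0).
set s := Num.sqrt LK in s0 sL h2 h4 *.
set q := Num.sqrt aT in h2 h4 *.
have e : (3 * LK + B) / s * q = 3 * s * q + B * (q / s).
  rewrite -sL; field; exact: lt0r_neq0.
rewrite e hsplit.
have : - LK / eta (st 0).2 i = - (LK / eta (st 0).2 i) by rewrite mulNr.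
move: lb h2 h3 h4; rewrite -/LK; lra.
Qed.

Lemma S_n n i : (st n).2 i = \sum_(0 <= t < n) rt t.+1 i ^+ 2.
Proof.
elim: n => [|n IH]; first by rewrite big_geq.
by rewrite S_S big_nat_recr //= IH.
Qed.

End AMP.

Section P4.
Variables (R : realType) (d : nat).
Local Notation V := 'rV[R]_d.

Lemma cvx_first (X : set V) (f : V -> R) (x y : V) :
  convex_on X f -> X x -> X y -> differentiable f x ->
  'd f x (y - x) <= f y - f x.
Proof.
move=> cf Xx Xy df.
have der : derivable f x (y - x) := diff_derivable df.
rewrite -deriveE //.
rewrite /derive.
set g := (fun h : R => _).
rewrite (cvg_at_rightE g 0) //.
apply: limr_le.
  apply/cvg_ex; exists (lim (g @ 0^')); exact: cvg_dnbhs_at_right der.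
near=> h.
have h0 : 0 < h by near: h; exact: nbhs_right_gt.
have h1 : h < 1 by near: h; exact: nbhs_right_lt.
rewrite /g /=.
have := cf y x Xy Xx h ltac:(apply/andP; split; lra).
have -> : h *: y + (1 - h) *: x = h *: (y - x) + x.
  rewrite scalerBr scalerBl scale1r addrA. by rewrite addrAC.
move=> H.
rewrite -[_ *: _]/(h^-1 * _) ler_pdivrMl //.
lra.
Unshelve. all: by end_near.
Qed.

Lemma grad_dot (f : V -> R) (x v : V) : dotp (grad f x) v = 'd f x v.
Proof.
rewrite /dotp /grad [in RHS](row_sum_delta v) linear_sum /=.
apply: eq_bigr => i _; rewrite mxE linearZ /=.
by rewrite mulrC.
Qed.

Lemma dotpB (g u w : V) : dotp g (u - w) = dotp g u - dotp g w.
Proof. by rewrite /dotp -sumrB; apply: eq_bigr => i _; rewrite !mxE mulrBr. Qed.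

Lemma dotp_sum n (g : V) (p : 'I_n -> R) (z : 'I_n -> V) :
  dotp g (\sum_(i < n) p i *: z i) = \sum_(i < n) p i * dotp g (z i).
Proof.
rewrite /dotp.
under eq_bigr => j _ do rewrite summxE mulr_sumr.
rewrite exchange_big /=; apply: eq_bigr => i _.
rewrite mulr_sumr; apply: eq_bigr => j _; rewrite mxE; ring.
Qed.

Lemma dotp_self (u : V) : 0 <= \sum_(i < d) u 0 i ^+ 2.
Proof. by apply: sumr_ge0 => i _; exact: sqr_ge0. Qed.

Lemma enorm_sqr (u : V) : enorm u ^+ 2 = \sum_(i < d) u 0 i ^+ 2.
Proof. by rewrite /enorm sqr_sqrtr // dotp_self. Qed.

Lemma cs_half (u v : V) : dotp u v <= enorm u * enorm v.
Proof.
set a := enorm u; set b := enorm v.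
have a0 : 0 <= a by exact: sqrtr_ge0.
have b0 : 0 <= b by exact: sqrtr_ge0.
have key : 0 <= \sum_(i < d) (b * u 0 i - a * v 0 i) ^+ 2.
  by apply: sumr_ge0 => i _; exact: sqr_ge0.
have e : \sum_(i < d) (b * u 0 i - a * v 0 i) ^+ 2 =
    b ^+ 2 * (\sum_(i < d) u 0 i ^+ 2) + a ^+ 2 * (\sum_(i < d) v 0 i ^+ 2)
    - 2 * a * b * dotp u v.
  transitivity (\sum_(i < d) (b ^+ 2 * u 0 i ^+ 2 + a ^+ 2 * v 0 i ^+ 2
      - 2 * a * b * (u 0 i * v 0 i))).
    by apply: eq_bigr => i _; ring.
  by rewrite sumrB big_split /= /dotp !mulr_sumr.
rewrite e -!enorm_sqr -/a -/b in key.
have [a00|apos] := eqVneq a 0.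
  rewrite a00 mul0r.
  have u0 : forall i, u 0 i = 0.
    move=> i; have h : \sum_(j < d) u 0 j ^+ 2 = 0.
      by rewrite -enorm_sqr -/a a00 expr0n.
    have : u 0 i ^+ 2 <= 0.
      rewrite -h (bigD1 i) //= lerDl; apply: sumr_ge0 => j _; exact: sqr_ge0.
    have := sqr_ge0 (u 0 i); move=> h1 h2.
    by apply/eqP; rewrite -sqrf_eq0 eq_le h2 h1.
  by rewrite /dotp big1 // => i _; rewrite u0 mul0r.
have ap : 0 < a by rewrite lt_neqAle eq_sym apos.
have [b00|bpos] := eqVneq b 0.
  rewrite b00 mulr0.
  have v0 : forall i, v 0 i = 0.
    move=> i; have h : \sum_(j < d) v 0 j ^+ 2 = 0.
      by rewrite -enorm_sqr -/b b00 expr0n.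
    have : v 0 i ^+ 2 <= 0.
      rewrite -h (bigD1 i) //= lerDl; apply: sumr_ge0 => j _; exact: sqr_ge0.
    have := sqr_ge0 (v 0 i); move=> h1 h2.
    by apply/eqP; rewrite -sqrf_eq0 eq_le h2 h1.
  by rewrite /dotp big1 // => i _; rewrite v0 mulr0.
have bp : 0 < b by rewrite lt_neqAle eq_sym bpos.
have ab : 0 < a * b by rewrite mulr_gt0.
have : 0 <= 2 * (a * b) * (a * b - dotp u v).
  have -> : 2 * (a * b) * (a * b - dotp u v) = b ^+ 2 * a ^+ 2 + a ^+ 2 * b ^+ 2 - 2 * a * b * dotp u v by ring.
  exact: key.
rewrite pmulr_rge0; first lra.
by rewrite mulr_gt0.
Qed.

Lemma enormN (v : V) : enorm (- v) = enorm v.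
Proof. by rewrite /enorm; congr Num.sqrt; apply: eq_bigr => i _; rewrite mxE sqrrN. Qed.

Lemma dotpN (u v : V) : dotp u (- v) = - dotp u v.
Proof. by rewrite /dotp -sumrN; apply: eq_bigr => i _; rewrite mxE mulrN. Qed.

Lemma cs_abs (u v : V) : `|dotp u v| <= enorm u * enorm v.
Proof.
rewrite ler_norml cs_half andbT.
have := cs_half u (- v); rewrite dotpN enormN; lra.
Qed.

Lemma cvx_comb (X : set V) n (p : 'I_n -> R) (z : 'I_n -> V) :
  convex_set X -> (forall i, 0 <= p i) -> \sum_(i < n) p i = 1 ->
  (forall i, X (z i)) -> X (\sum_(i < n) p i *: z i).
Proof.
move=> cX; elim: n p z => [|n IH] p z p0 p1 zX.
  by move: p1; rewrite big_ord0 => /eqP; rewrite eq_sym oner_eq0.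
rewrite big_ord_recr /=; rewrite big_ord_recr /= in p1.
set s := \sum_(i < n) p (widen_ord (leqnSn n) i) in p1.
have s0 : 0 <= s by apply: sumr_ge0 => i _; exact: p0.
have [s00|spos] := eqVneq s 0.
  have pw : forall i : 'I_n, p (widen_ord (leqnSn n) i) = 0.
    move=> i; apply/eqP; move/eqP: s00; rewrite psumr_eq0; last by move=> j _; exact: p0.
    by move/allP => /(_ i (mem_index_enum _)) /=.
  rewrite big1; last by move=> i _; rewrite pw scale0r.
  have -> : p ord_max = 1 by move: p1; rewrite s00 add0r.
  by rewrite add0r scale1r.
have sp : 0 < s by rewrite lt_neqAle eq_sym spos.
set y := \sum_(i < n) (p (widen_ord (leqnSn n) i) / s) *: z (widen_ord (leqnSn n) i).
have Xy : X y.
  apply: IH => //.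
    by move=> i; rewrite divr_ge0 // p0.
  by rewrite -mulr_suml -/s mulfV.
have -> : \sum_(i < n) p (widen_ord (leqnSn n) i) *: z (widen_ord (leqnSn n) i) = s *: y.
  rewrite /y scaler_sumr; apply: eq_bigr => i _; rewrite scalerA mulrCA mulfV ?mulr1 //.
have -> : s = 1 - p ord_max by rewrite -p1 addrK.
rewrite addrC; apply: cX => //.
have := p0 ord_max; move: p1 s0; lra.
Qed.

End P4.

Section P5.
Variables (R : realType) (d : nat) (X : set 'rV[R]_d) (D G : R) (T : nat)
  (Astr Aexp : seq (R -> alg R d)) (Acon : seq (alg R d))
  (fs : nat -> 'rV[R]_d -> R) (xbar : 'rV[R]_d).

Local Notation E := (experts T Astr Aexp Acon).
Local Notation K := (size E).

Definition Lp (t : nat) (p : 'I_K -> R) : 'I_K -> R :=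
  usc_loss fs G D xbar t (\sum_(i < K) p i *: xexp fs t i).

Lemma state_eq n : usc_state T Astr Aexp Acon fs G D xbar n = st Lp n.
Proof. by elim: n => [//|n IH] /=; rewrite IH. Qed.

Lemma usc_xE t : usc_x T Astr Aexp Acon fs G D xbar t = \sum_(i < K) pt Lp t i *: xexp fs t i.
Proof. by rewrite /usc_x state_eq /pt; case: (st Lp t.-1). Qed.

Hypothesis hT : (2 <= T)%N.
Hypothesis hdom : domain_ok X D.
Hypothesis hD : 0 < D.
Hypothesis hG : 0 < G.
Hypothesis hadm : admissible X G T fs.
Hypothesis hstr : forall A, A \in Astr -> forall lam, 0 < lam -> online_alg X (A lam).
Hypothesis hexp : forall A, A \in Aexp -> forall a, 0 < a -> online_alg X (A a).
Hypothesis hcon : forall A, A \in Acon -> online_alg X A.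
Hypothesis hxbar : X xbar.
Hypothesis hK : (1 < K)%N.

Lemma grid_pos (lam : R) : lam \in grid R T -> 0 < lam.
Proof.
case/mapP => k _ ->; apply: divr_gt0; first by rewrite ltr0n expn_gt0.
by rewrite ltr0n; apply: leq_trans hT.
Qed.

Lemma E_online A : A \in E -> online_alg X A.
Proof.
rewrite /experts !mem_cat => /orP[|/orP[]].
- by case/allpairsP => [[B lam] [/= hB hl ->]]; apply: hstr => //; exact: grid_pos.
- by case/allpairsP => [[B lam] [/= hB hl ->]]; apply: hexp => //; exact: grid_pos.
- exact: hcon.
Qed.

Lemma xexp_in t (i : 'I_K) : X (xexp fs t i).
Proof. by rewrite /xexp; apply: E_online; exact: mem_nth. Qed.

Lemma x_in t (p : 'I_K -> R) : (forall i, 0 <= p i) -> \sum_(i < K) p i = 1 ->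
  X (\sum_(i < K) p i *: xexp fs t i).
Proof.
move=> p0 p1; case: hdom => _ [_ [cX _]].
by apply: cvx_comb => // i; exact: xexp_in.
Qed.

Lemma dot_bound t (x z : 'rV[R]_d) : (0 < t <= T)%N -> X x -> X z ->
  `|dotp (grad (fs t) x) (z - xbar)| <= G * D.
Proof.
move=> tT Xx Xz.
have [_ [_ gb]] := hadm tT.
case: hdom => _ [_ [_ hd]].
apply: (le_trans (cs_abs _ _)); apply: ler_pM; rewrite ?sqrtr_ge0 //.
  exact: gb.
exact: hd.
Qed.

Lemma hL : forall t p, (0 < t <= T)%N -> (forall i, 0 <= p i) ->
  \sum_(i < K) p i = 1 -> forall i, 0 <= Lp t p i <= 1.
Proof.
move=> t p tT p0 p1 i.
have := dot_bound tT (x_in t p0 p1) (xexp_in t i).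
rewrite /Lp /usc_loss ler_norml => /andP[h1 h2].
have m0 : 0 < 2 * G * D by rewrite !mulr_gt0.
apply/andP; split.
  by apply: divr_ge0; [lra | exact: ltW].
by rewrite ler_pdivrMr //; lra.
Qed.

Lemma pt_prob t : (0 < t <= T)%N ->
  (forall i, 0 <= pt Lp t i) /\ \sum_(i < K) pt Lp t i = 1.
Proof.
case: t => [//|n] /andP[_ nT].
have [p0 p1 _ _ _] := bounds_of hK hL nT (w_pos hK hL (ltnW nT)).
by split.
Qed.

Lemma rt_eq t (j : 'I_K) : (0 < t <= T)%N ->
  2 * G * D * rt Lp t j =
  dotp (grad (fs t) (usc_x T Astr Aexp Acon fs G D xbar t)) (usc_x T Astr Aexp Acon fs G D xbar t)
  - dotp (grad (fs t) (usc_x T Astr Aexp Acon fs G D xbar t)) (xexp fs t j).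
Proof.
move=> tT.
have [p0 p1] := pt_prob tT.
rewrite usc_xE /rt /lt /Lp /usc_loss.
set x := \sum_(i < K) pt Lp t i *: xexp fs t i.
set g := grad (fs t) x.
set c := G * D.
set m := 2 * G * D.
have m0 : m != 0 by rewrite /m !mulf_neq0 // lt0r_neq0.
have e1 : \sum_(i < K) pt Lp t i * ((dotp g (xexp fs t i - xbar) + c) / m) =
    (dotp g x - dotp g xbar + c) / m.
  rewrite /x dotp_sum.
  transitivity (\sum_(i < K) (pt Lp t i * dotp g (xexp fs t i)) / m +
       \sum_(i < K) pt Lp t i * ((c - dotp g xbar) / m)).
    rewrite -big_split /=; apply: eq_bigr => i _; rewrite dotpB; ring.
  by rewrite -mulr_suml -mulr_suml p1 mul1r; ring.
rewrite e1 dotpB; field; exact: m0.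
Qed.

Lemma rt_sq t (j : 'I_K) : (0 < t <= T)%N ->
  rt Lp t j ^+ 2 <= enorm (grad (fs t) (usc_x T Astr Aexp Acon fs G D xbar t)) ^+ 2 / (4 * G ^+ 2).
Proof.
move=> tT.
have [p0 p1] := pt_prob tT.
have e := rt_eq j tT.
set x := usc_x T Astr Aexp Acon fs G D xbar t in e *.
set g := grad (fs t) x in e *.
have Xx : X x by rewrite /x usc_xE; exact: x_in.
have hb : `|dotp g (x - xexp fs t j)| <= enorm g * D.
  apply: (le_trans (cs_abs _ _)); apply: ler_wpM2l; first exact: sqrtr_ge0.
  by case: hdom => _ [_ [_ hd]]; apply: hd => //; exact: xexp_in.
rewrite dotpB -e in hb.
have m0 : 0 < 2 * G * D by rewrite !mulr_gt0.
have hr : rt Lp t j = (2 * G * D * rt Lp t j) / (2 * G * D) by field; rewrite !lt0r_neq0.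
set z := 2 * G * D * rt Lp t j in hb hr.
rewrite hr.
have en0 : 0 <= enorm g by exact: sqrtr_ge0.
have : z ^+ 2 <= (enorm g * D) ^+ 2.
  move: hb; rewrite ler_norml => /andP[h1 h2].
  have : 0 <= enorm g * D by rewrite mulr_ge0 // ltW.
  nra.
move=> hz.
have -> : enorm g ^+ 2 / (4 * G ^+ 2) = (enorm g * D) ^+ 2 / (2 * G * D) ^+ 2.
  by field; rewrite !lt0r_neq0.
rewrite expr_div_n ler_pM2r //; rewrite invr_gt0 exprn_gt0 //.
Qed.

Lemma Gamma_ge0 : 0 <= Gamma R K T.
Proof.
rewrite /Gamma; apply: addr_ge0.
  by apply: mulr_ge0 => //; apply: ln_ge0; rewrite ler1n; apply: ltnW.
apply: ln_ge0; rewrite lerDl; apply: mulr_ge0.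
  by apply: divr_ge0 => //; apply: mulr_ge0 => //; exact: expR_ge0.
have : 0 <= ln (T.+1)%:R :> R by apply: ln_ge0; rewrite ler1n.
lra.
Qed.

Lemma main_bound (k : 'I_(size Acon)) (r : R) :
  regret_bound X G T (nth (fun _ => 0) Acon k) r -> forall u, X u ->
  \sum_(1 <= t < T.+1) fs t (usc_x T Astr Aexp Acon fs G D xbar t)
    - \sum_(1 <= t < T.+1) fs t u
  <= r + add_term (R:=R) K T G D
       (\sum_(1 <= t < T.+1) enorm (grad (fs t) (usc_x T Astr Aexp Acon fs G D xbar t)) ^+ 2).
Proof.
move=> hr u Xu.
set n1 := size [seq A lam | A <- Astr, lam <- grid R T].
set n2 := size [seq A a | A <- Aexp, a <- grid R T].
have jlt : (n1 + n2 + k < K)%N.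
  by rewrite /experts !size_cat -/n1 -/n2 addnA ltn_add2l.
set j : 'I_K := Ordinal jlt.
set y := fun t => nth (fun _ => 0) Acon k (hist fs t).
have xj : forall t, xexp fs t j = y t.
  move=> t; rewrite /xexp /y /= nth_cat -/n1 -addnA ltnNge leq_addr /= addKn.
  by rewrite nth_cat -/n2 ltnNge leq_addr /= addKn.
have reg := hr fs hadm u Xu.
set x := fun t => usc_x T Astr Aexp Acon fs G D xbar t.
set s := \sum_(1 <= t < T.+1) enorm (grad (fs t) (x t)) ^+ 2.
have step : \sum_(1 <= t < T.+1) (fs t (x t) - fs t (y t)) <=
    \sum_(1 <= t < T.+1) 2 * G * D * rt Lp t j.
  apply: ler_sum_nat => t /andP[t1 tT].
  have tT' : (0 < t <= T)%N by rewrite t1.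
  have [p0 p1] := pt_prob tT'.
  have Xx : X (x t) by rewrite /x usc_xE; exact: x_in.
  have Xy : X (y t) by rewrite -(xj t); exact: xexp_in.
  have [cf [df _]] := hadm tT'.
  have := cvx_first (cf) Xx Xy (df _ Xx).
  rewrite -grad_dot dotpB rt_eq // xj; lra.
have hsum : \sum_(1 <= t < T.+1) 2 * G * D * rt Lp t j =
    2 * G * D * \sum_(0 <= t < T) rt Lp t.+1 j by rewrite big_add1 /= -mulr_sumr.
have amp := amp_bound hK hL j.
have hS : (st Lp T).2 j <= s / (4 * G ^+ 2).
  rewrite S_n /s big_add1 /= mulr_suml; apply: ler_sum_nat => t /andP[_ tT].
  exact: rt_sq.
have G0 : 0 < 4 * G ^+ 2 by rewrite mulr_gt0 // exprn_gt0.
have s0 : 0 <= s by apply: sumr_ge0 => t _; exact: sqr_ge0.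
have hq : Num.sqrt (1 + (st Lp T).2 j) <= Num.sqrt (4 * G ^+ 2 + s) / (2 * G).
  have -> : 2 * G = Num.sqrt (4 * G ^+ 2).
    have -> : 4 * G ^+ 2 = (2 * G) ^+ 2 by ring.
    by rewrite sqrtr_sqr ger0_norm // mulr_ge0 // ltW.
  rewrite -sqrt_div ?(addr_ge0 (ltW G0) s0) // ler_sqrt; last by apply: divr_ge0; lra.
  have -> : (4 * G ^+ 2 + s) / (4 * G ^+ 2) = 1 + s / (4 * G ^+ 2).
    by field; rewrite lt0r_neq0.
  by rewrite lerD2l.
have Gm0 := Gamma_ge0.
have LK0 : 0 < Num.sqrt (ln (K%:R : R)) by rewrite sqrtr_gt0; exact: LK_gt0.
set Gm := Gamma R K T in amp Gm0 *.
set sl := Num.sqrt (ln (K%:R : R)) in amp LK0 *.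
set Q := Num.sqrt (4 * G ^+ 2 + s) in hq *.
have h5 : Gm / sl * Num.sqrt (1 + (st Lp T).2 j) <= Gm / sl * (Q / (2 * G)).
  by apply: ler_wpM2l => //; apply: divr_ge0 => //; exact: ltW.
have m0 : 0 < 2 * G * D by rewrite !mulr_gt0.
have h6 : 2 * G * D * \sum_(0 <= t < T) rt Lp t.+1 j <=
    2 * G * D * (Gm / sl * (Q / (2 * G)) + 2 * Gm).
  by rewrite ler_pM2l //; lra.
have e7 : 2 * G * D * (Gm / sl * (Q / (2 * G)) + 2 * Gm) = add_term K T G D s.
  by rewrite /add_term -/Gm -/sl -/Q; field; rewrite !lt0r_neq0.
have hsplit : \sum_(1 <= t < T.+1) fs t (x t) - \sum_(1 <= t < T.+1) fs t u =
    \sum_(1 <= t < T.+1) (fs t (x t) - fs t (y t)) +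
    (\sum_(1 <= t < T.+1) fs t (y t) - \sum_(1 <= t < T.+1) fs t u).
  by rewrite sumrB; ring.
rewrite hsplit.
have : \sum_(1 <= t < T.+1) fs t (nth (fun _ => 0) Acon k (hist fs t)) -
     \sum_(1 <= t < T.+1) fs t u <= r by exact: reg.
rewrite -/y.
move: step; rewrite hsum e7 in h6 *; lra.
Qed.

End P5.

Section P6.
Variable R : realType.

Lemma ln2_bounds : 1 / 2 <= ln (2 : R) <= 1.
Proof.
apply/andP; split.
  have := @ln_ge1V R 2 ltac:(lra); lra.
have := @ln_le_sub1 R 2 ltac:(lra); lra.
Qed.

Lemma ln_pow2 (n : nat) : ln ((2 ^ n)%:R : R) = n%:R * ln 2.
Proof. by rewrite natrX lnXn // mulr_natl. Qed.

Lemma lnT_ge4 (T : nat) : (256 <= T)%N -> 4 <= ln (T%:R : R).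
Proof.
move=> hT.
have : ln ((2 ^ 8)%:R : R) <= ln (T%:R : R).
  by rewrite ler_ln ?posrE ?ltr0n ?ler_nat //; apply: leq_trans hT.
rewrite ln_pow2; have := ln2_bounds; lra.
Qed.

Lemma N_lb (T : nat) : (2 <= T)%N -> ln (T%:R : R) <= (up_log 2 T)%:R.
Proof.
move=> hT.
have h : ln (T%:R : R) <= ln ((2 ^ up_log 2 T)%:R).
  rewrite ler_ln ?posrE ?ltr0n ?expn_gt0 // ?ler_nat; last by apply: leq_trans hT.
  exact: up_logP.
rewrite ln_pow2 in h.
have := ln2_bounds => /andP[_ l1].
have : (up_log 2 T)%:R * ln (2 : R) <= (up_log 2 T)%:R.
  by rewrite -{2}[(up_log 2 T)%:R]mulr1 ler_wpM2l.
lra.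
Qed.

Lemma N_ub (T : nat) : (2 <= T)%N -> (up_log 2 T)%:R <= 1 + 2 * ln (T%:R : R).
Proof.
move=> hT.
have N0 : (0 < up_log 2 T)%N by rewrite up_log_gt0.
have h := up_log_gtn (isT : (1 < 2)%N) hT.
have : ln ((2 ^ (up_log 2 T).-1)%:R : R) <= ln (T%:R : R).
  rewrite ler_ln ?posrE ?ltr0n ?expn_gt0 // ?ler_nat; first exact: ltnW.
  by apply: leq_trans hT.
rewrite ln_pow2.
have := ln2_bounds => /andP[l2 _].
have e : (up_log 2 T)%:R = 1 + ((up_log 2 T).-1)%:R :> R.
  by rewrite -[in LHS](prednK N0) -addn1 natrD addrC.
have : ((up_log 2 T).-1)%:R / 2 <= ((up_log 2 T).-1)%:R * ln (2 : R) :> R.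
  by apply: ler_wpM2l => //; lra.
rewrite e; lra.
Qed.

Lemma sqrt_le_self (x : R) : 1 <= x -> Num.sqrt x <= x.
Proof.
move=> x1.
have s0 := sqrtr_ge0 x.
have s2 := sqr_sqrtr (le_trans ler01 x1).
have : 1 <= Num.sqrt x by rewrite -sqrtr1 ler_sqrt //; lra.
nra.
Qed.

Lemma sqrt_le_of (x y : R) : 0 <= y -> x <= y ^+ 2 -> Num.sqrt x <= y.
Proof.
move=> y0 h.
have : Num.sqrt x <= Num.sqrt (y ^+ 2).
  by rewrite ler_sqrt // sqr_ge0.
by rewrite sqrtr_sqr ger0_norm.
Qed.

Theorem asymp (c : nat) (G D : R) : 0 < G -> 0 < D ->
  exists (C : R) (T0 : nat), forall (T a b e : nat),
    (T0 <= T)%N -> (a <= c)%N -> (b <= c)%N -> (e <= c)%N -> (0 < a + b)%N ->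
    forall s : R, 0 <= s <= T%:R * G ^+ 2 ->
      add_term (R:=R) ((a + b) * (Ngrid T).+1 + e) T G D s
      <= C * Num.sqrt (T%:R * ln (ln (T%:R : R))).
Proof.
move=> G0 D0.
set al := ln (9 * c%:R : R) + 1.
exists (42 * al * G * D), 256%N.
move=> T a b e hT ha hb he hab s /andP[s0 hsT].
have T2 : (2 <= T)%N by apply: leq_trans hT.
have T1 : (1 <= T)%N by apply: leq_trans T2.
have c1 : (1 <= c)%N.
  rewrite lt0n; apply/negP => /eqP c0.
  by move: ha hb hab; rewrite c0 !leqn0 => /eqP -> /eqP ->.
set tau := ln (T%:R : R).
have tau4 : 4 <= tau by exact: lnT_ge4.
set lam := ln tau.
have lam1 : 1 <= lam.
  have : ln (4 : R) <= lam by rewrite ler_ln ?posrE //; lra.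
  have -> : (4 : R) = (2 ^ 2)%N%:R by [].
  rewrite ln_pow2; have := ln2_bounds; lra.
set N := Ngrid T.
have Nlb : tau <= N%:R by exact: N_lb.
have Nub : N%:R <= 1 + 2 * tau by exact: N_ub.
set K := ((a + b) * N.+1 + e)%N.
have KgeM : (N.+1 <= K)%N.
  by rewrite /K; apply: leq_trans (leq_addr _ _); apply: leq_pmull.
have KleM : (K <= 3 * c * N.+1)%N.
  rewrite /K.
  have h1 : ((a + b) * N.+1 <= 2 * c * N.+1)%N.
    by rewrite leq_mul2r; apply/orP; right; rewrite mul2n -addnn leq_add.
  have h2 : (e <= c * N.+1)%N by apply: leq_trans he _; exact: leq_pmulr.
  have e3 : (2 * c * N.+1 + c * N.+1 = 3 * c * N.+1)%N.
    by rewrite -mulnDl -{2}[c]mul1n -mulnDl.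
  rewrite -e3; exact: leq_add h1 h2.
set Kr := (K%:R : R).
have cr1 : (1 : R) <= c%:R by rewrite ler1n.
have Kge : tau + 1 <= Kr.
  have : (N.+1%:R : R) <= Kr by rewrite ler_nat.
  rewrite -addn1 natrD; lra.
have Kle : Kr <= 9 * c%:R * tau.
  have : Kr <= (3 * c * N.+1)%:R by rewrite ler_nat.
  rewrite !natrM -addn1 natrD.
  have : 3%:R * c%:R * (N%:R + 1) <= 3%:R * c%:R * (3 * tau) :> R.
    apply: ler_wpM2l; first by apply: mulr_ge0; lra.
    lra.
  lra.
have tau0 : 0 < tau by lra.
have K0 : 0 < Kr by lra.
set l := ln Kr.
have llam : lam <= l by rewrite ler_ln ?posrE //; lra.
have lle : l <= ln (9 * c%:R) + lam.
  rewrite -lnM ?posrE //; last by apply: mulr_gt0; lra.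
  by rewrite ler_ln ?posrE //; apply: mulr_gt0 => //; apply: mulr_gt0; lra.
have ln9c : 0 <= ln (9 * c%:R : R) by apply: ln_ge0; lra.
have lal : l <= al * lam by rewrite /al; nra.
have al1 : 1 <= al by rewrite /al; lra.
have l0 : 0 < l by lra.
have e1 : 1 <= expR (1 : R).
  by rewrite -[X in X <= _]expR0 ler_expR ler01.
have lnT1 : ln ((T.+1)%:R : R) <= 1 + tau.
  have : ln ((T.+1)%:R : R) <= ln (2 * T%:R).
    rewrite ler_ln ?posrE ?ltr0n //; last by apply: mulr_gt0; rewrite ?ltr0n.
    by rewrite -natrM ler_nat mul2n -addnn -addn1 leq_add2l.
  rewrite lnM ?posrE ?ltr0n //.
  rewrite -/tau; have := ln2_bounds; lra.
have lnT0 : 0 <= ln ((T.+1)%:R : R) by apply: ln_ge0; rewrite ler1n.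
have X0 : 0 <= Kr / (2 * expR 1) * (1 + ln (T.+1)%:R).
  apply: mulr_ge0; last lra.
  by apply: divr_ge0; [lra| apply: mulr_ge0 => //; exact: expR_ge0].
have hB : ln (1 + Kr / (2 * expR 1) * (1 + ln (T.+1)%:R)) <= 3 * l.
  have -> : 3 * l = ln (Kr ^+ 3) by rewrite lnXn // mulr_natl.
  rewrite ler_ln ?posrE; last by apply: exprn_gt0.
    have h1 : Kr / (2 * expR 1) <= Kr.
      rewrite ler_pdivrMr; last by apply: mulr_gt0 => //; exact: expR_gt0.
      by rewrite -{1}[Kr]mulr1 ler_wpM2l //; lra.
    have h2 : 1 + ln (T.+1)%:R <= 2 * Kr by lra.
    have h3 : Kr / (2 * expR 1) * (1 + ln (T.+1)%:R) <= Kr * (2 * Kr).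
      apply: ler_pM => //; first by apply: divr_ge0; [lra| apply: mulr_ge0 => //; exact: expR_ge0].
      lra.
    apply: (le_trans (lerD (lexx 1) h3)).
    have : 4 <= Kr by lra.
    move=> K4; nra.
  lra.
have hG : Gamma R K T <= 6 * l by rewrite /Gamma -/Kr -/l; lra.
have Gm0 : 0 <= Gamma R K T.
  rewrite /Gamma -/Kr -/l; apply: addr_ge0; first lra.
  by apply: ln_ge0; rewrite lerDl.
set sl := Num.sqrt l.
have sl0 : 0 < sl by rewrite sqrtr_gt0.
have sl2 : sl ^+ 2 = l by rewrite sqr_sqrtr // ltW.
set sqT := Num.sqrt (T%:R : R).
have sT0 : 0 <= sqT by exact: sqrtr_ge0.
have sT2 : sqT ^+ 2 = T%:R by rewrite sqr_sqrtr.
set slam := Num.sqrt lam.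
have slam0 : 0 <= slam by exact: sqrtr_ge0.
have slam2 : slam ^+ 2 = lam by rewrite sqr_sqrtr //; lra.
have lamT : lam <= T%:R.
  have h1 : lam <= tau - 1 by apply: ln_le_sub1.
  have h2 : tau <= T%:R - 1 by apply: ln_le_sub1; rewrite ltr0n.
  lra.
have slamT : slam <= sqT by rewrite ler_sqrt //; lra.
have slal : sl <= al * slam.
  apply: sqrt_le_of; first by apply: mulr_ge0; lra.
  rewrite exprMn slam2.
  have : al <= al ^+ 2 by nra.
  nra.
have hQ : Num.sqrt (4 * G ^+ 2 + s) <= 3 * G * sqT.
  apply: sqrt_le_of; first by apply: mulr_ge0 => //; lra.
  rewrite !exprMn sT2.
  have : (1 : R) <= T%:R by rewrite ler1n.
  nra.
have hsq : Num.sqrt (T%:R * lam) = sqT * slam by rewrite sqrtrM // ler0n.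
rewrite hsq /add_term -/Kr -/l -/sl.
set Gm := Gamma R K T in hG Gm0 *.
set Q := Num.sqrt (4 * G ^+ 2 + s) in hQ *.
have t1 : 4 * Gm * G * D <= 24 * al * G * D * (sqT * slam).
  have : Gm <= 6 * al * (slam * sqT).
    have : lam <= slam * sqT by rewrite -slam2 expr2 ler_wpM2l.
    move=> h; apply: (le_trans hG).
    have : l <= al * (slam * sqT) by apply: (le_trans lal); apply: ler_wpM2l; lra.
    lra.
  move=> h.
  have GD : 0 < G * D by apply: mulr_gt0.
  have : 4 * Gm * G * D = (4 * Gm) * (G * D) by ring.
  have : 24 * al * G * D * (sqT * slam) = (4 * (6 * al * (slam * sqT))) * (G * D) by ring.
  move=> -> ->; rewrite ler_pM2r //; lra.
have t2 : Gm * D / sl * Q <= 18 * al * G * D * (sqT * slam).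
  have r1 : Gm / sl <= 6 * sl.
    rewrite ler_pdivrMr //; apply: (le_trans hG); rewrite -mulrA -expr2 sl2; lra.
  have r2 : Gm / sl <= 6 * al * slam.
    apply: (le_trans r1); rewrite -mulrA ler_pM2l //; lra.
  have -> : Gm * D / sl * Q = D * ((Gm / sl) * Q) by ring.
  have -> : 18 * al * G * D * (sqT * slam) = D * ((6 * al * slam) * (3 * G * sqT)) by ring.
  rewrite ler_pM2l //; apply: ler_pM => //.
    by apply: divr_ge0 => //; exact: ltW.
  exact: sqrtr_ge0.
have -> : 42 * al * G * D * (sqT * slam) = 24 * al * G * D * (sqT * slam) + 18 * al * G * D * (sqT * slam) by ring.
exact: lerD t1 t2.
Qed.

End P6.

Theorem theorem3 :
  (* main bound *)
  (forall (R : realType) (d : nat) (X : set 'rV[R]_d) (D G : R) (T : nat)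
     (Astr Aexp : seq (R -> alg R d)) (Acon : seq (alg R d))
     (fs : nat -> 'rV[R]_d -> R) (xbar : 'rV[R]_d),
     (2 <= T)%N ->
     domain_ok X D -> 0 < D -> 0 < G ->
     admissible X G T fs ->
     (forall A, A \in Astr -> forall lam, 0 < lam -> online_alg X (A lam)) ->
     (forall A, A \in Aexp -> forall a, 0 < a -> online_alg X (A a)) ->
     (forall A, A \in Acon -> online_alg X A) ->
     X xbar ->
     (1 < size (experts T Astr Aexp Acon))%N ->
     forall (k : 'I_(size Acon)) (r : R),
       regret_bound X G T (nth (fun _ => 0) Acon k) r ->
       forall u, X u ->
         \sum_(1 <= t < T.+1) fs t (usc_x T Astr Aexp Acon fs G D xbar t)
         - \sum_(1 <= t < T.+1) fs t u
         <= r + add_term (R:=R) (size (experts T Astr Aexp Acon)) T G D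
                  (\sum_(1 <= t < T.+1)
                     enorm (grad (fs t) (usc_x T Astr Aexp Acon fs G D xbar t)) ^+ 2))
  /\
  (* "in particular": with |A_str|,|A_exp|,|A_con| <= c (and A_str or A_exp
     nonempty), the additive term is O(sqrt(T log log T)) *)
  (forall (R : realType) (c : nat) (G D : R), 0 < G -> 0 < D ->
     exists (C : R) (T0 : nat), forall (T a b e : nat),
       (T0 <= T)%N -> (a <= c)%N -> (b <= c)%N -> (e <= c)%N -> (0 < a + b)%N ->
       forall s : R, 0 <= s <= T%:R * G ^+ 2 ->
         add_term (R:=R) ((a + b) * (Ngrid T).+1 + e) T G D s
         <= C * Num.sqrt (T%:R * ln (ln (T%:R : R)))).
Proof.
Proof.
split.
  move=> R d X D G T Astr Aexp Acon fs xbar hT hdom hD hG hadm hstr hexp hcon hxbar hK k r hr u Xu.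
  exact: (main_bound hT hdom hD hG hadm hstr hexp hcon hxbar hK hr Xu).
move=> R c G D G0 D0; exact: asymp.
Qed.
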